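(* Let $p$ be a prime, $K\in\{\mathbb Z_{(p)},\mathbb Z_p\}$, $F$ a field containing $K$, $G=\langle a\rangle\cong C_{p^2}$, $\Phi(x)=x^{p-1}+\dots+x+1$, and for $0\leq i\leq p-2$ let $X_i$ be the $KC_{p^2}$-submodule of $KC_{p^2}$ generated by $(a-1)\Phi(a^p)$ and $\Phi(a)+(a-1)^{i+1}$. Let $T_i:C_{p^2}\to\widehat{X_i}$ be the cocycle with $T_i(a)=p^{-2}\Phi(a)\Phi(a^p)+X_i$. Then $\mathrm{Crys}(C_{p^2};X_i;T_i)$ is torsion-free.
   Context: $FM=F\otimes_KM$, $\widehat M=FM/M$ with $g(x+M)=gx+M$; a $1$-cocycle is $T:G\to\widehat M$ with $T(gh)=gT(h)+T(g)$, determined for cyclic $G$ by $T(a)$ via $T(a^k)=(1+a+\dots+a^{k-1})T(a)$. $\mathrm{Crys}(G;M;T)=\{(g,x):g\in G,\ x\in FM,\ x+M=T(g)\}$ with $(g,x)(g',x')=(gg',g'x+x')$. *)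

(* Defs.v *)
From HB Require Import structures.
From mathcomp Require Import all_boot all_order all_algebra.
Set Implicit Arguments. Unset Strict Implicit. Unset Printing Implicit Defensive.
Import Order.TTheory GRing.Theory Num.Theory.
Local Open Scope ring_scope.

(* The ring of p-adic integers Z_p, as the inverse limit of            *)
(* Z/p^(n+1)Z: coherent sequences of canonical residues.               *)
(* (The modulus uses maxn 2 p so the type is sensible for every p;     *)
(*  for a prime p it is exactly p^(n+1).)                              *)
Definition zp_mod (p n : nat) : int := ((maxn 2 p) ^ n.+1)%N%:Z.

Definition Zp (p : nat) :=
  {x : nat -> int | forall n, x n = modz (x n.+1) (zp_mod p n)}.

Lemma zp_mod_mod (p n : nat) (a : int) :
  modz (modz a (zp_mod p n.+1)) (zp_mod p n) = modz a (zp_mod p n).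
Proof.
have -> : zp_mod p n.+1 = zp_mod p n * (maxn 2 p)%:Z.
  by rewrite /zp_mod expnSr PoszM.
rewrite [in RHS](intdiv.divz_eq a (zp_mod p n * (maxn 2 p)%:Z)).
by rewrite [_ * _%:Z]mulrC mulrA modzMDl.
Qed.

Lemma zp_add_proof p (x y : Zp p) n :
  modz (sval x n + sval y n) (zp_mod p n)
   = modz (modz (sval x n.+1 + sval y n.+1) (zp_mod p n.+1)) (zp_mod p n).
Proof.
rewrite zp_mod_mod (proj2_sig x n) (proj2_sig y n).
by rewrite modzDml modzDmr.
Qed.

Lemma zp_mul_proof p (x y : Zp p) n :
  modz (sval x n * sval y n) (zp_mod p n)
   = modz (modz (sval x n.+1 * sval y n.+1) (zp_mod p n.+1)) (zp_mod p n).
Proof.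
rewrite zp_mod_mod (proj2_sig x n) (proj2_sig y n).
by rewrite modzMml modzMmr.
Qed.

Lemma zp_one_proof p n :
  modz 1 (zp_mod p n) = modz (modz 1 (zp_mod p n.+1)) (zp_mod p n).
Proof. by rewrite zp_mod_mod. Qed.

Definition zp_add p (x y : Zp p) : Zp p :=
  exist _ (fun n => modz (sval x n + sval y n) (zp_mod p n)) (zp_add_proof x y).
Definition zp_mul p (x y : Zp p) : Zp p :=
  exist _ (fun n => modz (sval x n * sval y n) (zp_mod p n)) (zp_mul_proof x y).
Definition zp_one p : Zp p :=
  exist _ (fun n => modz 1 (zp_mod p n)) (@zp_one_proof p).

Definition is_Zloc_in (p : nat) (F : fieldType) (K : F -> Prop) : Prop :=
  [pchar F] =i pred0 /\
  (forall x : F, K x <-> exists q : rat, ~~ (p%:Z %| denq q)%Z /\ x = ratr q).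

Definition is_Zpadic_in (p : nat) (F : fieldType) (K : F -> Prop) : Prop :=
  exists phi : Zp p -> F,
    injective phi /\
    (forall x y, phi (zp_add x y) = phi x + phi y) /\
    (forall x y, phi (zp_mul x y) = phi x * phi y) /\
    phi (zp_one p) = 1 /\
    (forall x : F, K x <-> exists z, x = phi z).

(* The group algebra F C_{p^2} = F[X]/(X^{p^2} - 1), a = class of X.   *)
(* Elements are represented by their reduced representatives.          *)
Definition redG (F : fieldType) (p : nat) (q : {poly F}) : {poly F} :=
  modp q ('X^(p ^ 2) - 1).

Definition PhiP (F : fieldType) (p : nat) (y : {poly F}) : {poly F} :=
  \sum_(j < p) y ^+ j.

Definition genX1 (F : fieldType) (p : nat) : {poly F} :=
  ('X - 1) * PhiP p ('X^p).
Definition genX2 (F : fieldType) (p i : nat) : {poly F} :=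
  PhiP p 'X + ('X - 1) ^+ i.+1.

Definition Kpoly (F : fieldType) (K : F -> Prop) (u : {poly F}) : Prop :=
  forall j, K u`_j.

Definition in_Xi (F : fieldType) (K : F -> Prop) (p i : nat) (x : {poly F}) :=
  exists u v : {poly F}, Kpoly K u /\ Kpoly K v /\
    x = redG p (u * genX1 F p + v * genX2 F p i).

Definition in_FXi (F : fieldType) (p i : nat) (x : {poly F}) :=
  exists u v : {poly F}, x = redG p (u * genX1 F p + v * genX2 F p i).

(* representative of T_i(a^k) = (1 + a + ... + a^(k-1)) T_i(a),
   T_i(a) = p^(-2) Phi(a) Phi(a^p) + X_i *)
Definition Trep (F : fieldType) (p k : nat) : {poly F} :=
  redG p ((\sum_(j < k) 'X^j) *
          (((p ^ 2)%N%:R)^-1 *: (PhiP p 'X * PhiP p ('X^p)))).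

(* Crys(C_{p^2}; X_i; T_i): pairs (a^k, x), 0 <= k < p^2, x in F X_i,
   x + X_i = T_i(a^k). *)
Definition in_Crys (F : fieldType) (K : F -> Prop) (p i : nat)
    (c : nat * {poly F}) : Prop :=
  (c.1 < p ^ 2)%N /\ in_FXi p i c.2 /\ in_Xi K p i (c.2 - Trep F p c.1).

Definition crys_mul (F : fieldType) (p : nat) (c d : nat * {poly F}) :
    nat * {poly F} :=
  (((c.1 + d.1) %% (p ^ 2))%N, redG p ('X^(d.1) * c.2) + d.2).

Definition crys_one (F : fieldType) : nat * {poly F} := (0%N, 0).

Definition crys_pow (F : fieldType) (p : nat) (c : nat * {poly F}) (m : nat) :=
  iter m (fun d => crys_mul p d c) (crys_one F).

Definition crys_torsion_free (F : fieldType) (K : F -> Prop) (p i : nat) :=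
  forall c, in_Crys K p i c ->
    forall m : nat, (0 < m)%N -> crys_pow p c m = crys_one F -> c = crys_one F.

(* Main.v *)
Require Import Defs.
From HB Require Import structures.
From mathcomp Require Import all_boot all_order all_algebra.
From mathcomp Require Import ring zify.
From Stdlib Require Import FunctionalExtensionality ProofIrrelevance.
Set Implicit Arguments. Unset Strict Implicit. Unset Printing Implicit Defensive.
Import Order.TTheory GRing.Theory Num.Theory.
Local Open Scope ring_scope.

Section Poly.
Variable F : fieldType.
Variable p : nat.

Definition M1 : {poly F} := 'X^p - 1.
Definition M2 : {poly F} := 'X^(p ^ 2) - 1.
Definition Phi : {poly F} := PhiP p 'X.
Definition eqm (D f g : {poly F}) := D %| f - g.

Lemma eqm_refl D f : eqm D f f.
Proof. by rewrite /eqm subrr dvdp0. Qed.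
Lemma eqm_sym D f g : eqm D f g -> eqm D g f.
Proof.
rewrite /eqm => H; rewrite -opprB -mulN1r; exact: dvdp_mull.
Qed.
Lemma eqm_trans D f g h : eqm D f g -> eqm D g h -> eqm D f h.
Proof.
rewrite /eqm => H1 H2; have := dvdp_add H1 H2.
by rewrite addrA subrK.
Qed.
Lemma eqm_add D f g f' g' : eqm D f g -> eqm D f' g' -> eqm D (f + f') (g + g').
Proof.
rewrite /eqm => H1 H2; have := dvdp_add H1 H2.
by rewrite opprD addrACA.
Qed.
Lemma eqm_opp D f g : eqm D f g -> eqm D (- f) (- g).
Proof. by rewrite /eqm => H; rewrite -opprD -mulN1r; exact: dvdp_mull. Qed.
Lemma eqm_sub D f g f' g' : eqm D f g -> eqm D f' g' -> eqm D (f - f') (g - g').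
Proof. by move=> H1 H2; apply: eqm_add => //; apply: eqm_opp. Qed.
Lemma eqm_mul D f g f' g' : eqm D f g -> eqm D f' g' -> eqm D (f * f') (g * g').
Proof.
rewrite /eqm => H1 H2.
have -> : f * f' - g * g' = f * (f' - g') + (f - g) * g' by ring.
by apply: dvdp_add; [apply: dvdp_mull | apply: dvdp_mulr].
Qed.
Lemma eqm_scale D c f g : eqm D f g -> eqm D (c *: f) (c *: g).
Proof. by move=> H; rewrite -!mul_polyC; apply: eqm_mul => //; exact: eqm_refl. Qed.
Lemma eqm_sum D (I : Type) (r : seq I) (P : pred I) (f g : I -> {poly F}) :
  (forall i, P i -> eqm D (f i) (g i)) ->
  eqm D (\sum_(i <- r | P i) f i) (\sum_(i <- r | P i) g i).
Proof.
move=> H; apply: (big_ind2 (eqm D)); [exact: eqm_refl | exact: eqm_add | exact: H].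
Qed.
Lemma eqm_weak D D' f g : D' %| D -> eqm D f g -> eqm D' f g.
Proof. by move=> H1 H2; exact: dvdp_trans H1 H2. Qed.
Lemma eqm_dvd D f : eqm D f 0 = (D %| f).
Proof. by rewrite /eqm subr0. Qed.

Lemma dvd_Xn1 (y : {poly F}) j : (y - 1) %| y ^+ j - 1.
Proof. by rewrite subrX1 dvdp_mulr. Qed.

Lemma M1_M2 : M1 %| M2.
Proof. by rewrite /M1 /M2 -mulnn exprM dvd_Xn1. Qed.

Lemma X1_dvd k : ('X - 1 : {poly F}) %| 'X^k - 1.
Proof. exact: dvd_Xn1. Qed.

Lemma eqm_X1 f g : eqm ('X - 1) f g -> f.[1] = g.[1].
Proof.
rewrite /eqm -polyC1 dvdp_XsubCl /root hornerD hornerN subr_eq0.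
by move/eqP.
Qed.

Lemma redG_eqm q : eqm M2 (redG p q) q.
Proof.
rewrite /eqm /redG -/M2.
set r := q %% M2; set d := q %/ M2.
have e := divp_eq q M2; rewrite -/r -/d in e.
rewrite [X in _ - X]e (_ : r - (d * M2 + r) = (- d) * M2); last by ring.
exact: dvdp_mull.
Qed.

Lemma crys_pow_eqm D k x n : D %| M2 -> D %| 'X^k - 1 ->
  eqm D (crys_pow p (k, x) n).2 (x *+ n).
Proof.
move=> DM2 Dk; elim: n => [|n IH]; first by rewrite mulr0n; exact: eqm_refl.
rewrite /crys_pow iterS -/(crys_pow p (k, x) n) /crys_mul /=.
rewrite mulrSr; apply: eqm_add; last exact: eqm_refl.
apply: eqm_trans (eqm_weak DM2 (redG_eqm _)) _.
apply: eqm_trans IH.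
by rewrite /eqm -{2}(mul1r (crys_pow p (k, x) n).2) -mulrBl; apply: dvdp_mulr.
Qed.

End Poly.
Section Abs.
Variable F : fieldType.
Variable K : F -> Prop.
Variable p : nat.
Hypothesis pP : prime p.
Hypothesis K1 : K 1.
Hypothesis KN1 : K (-1).
Hypothesis KD : forall x y, K x -> K y -> K (x + y).
Hypothesis KM : forall x y, K x -> K y -> K (x * y).
Hypothesis char0 : forall n : nat, (n%:R == 0 :> F) = (n == 0)%N.
Hypothesis noinv : ~ K (p%:R^-1).

Lemma K0 : K 0.
Proof. by rewrite -(subrr (1:F)); apply: KD. Qed.

Lemma KN x : K x -> K (- x).
Proof. by move=> Kx; rewrite -mulN1r; apply: KM. Qed.

Lemma KB x y : K x -> K y -> K (x - y).
Proof. by move=> Kx Ky; apply: KD => //; apply: KN. Qed.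

Lemma Knat n : K n%:R.
Proof. elim: n => [|n IH]; first exact: K0. by rewrite mulrS; apply: KD. Qed.

Lemma Ksum (I : Type) (r : seq I) (P : pred I) (f : I -> F) :
  (forall i, P i -> K (f i)) -> K (\sum_(i <- r | P i) f i).
Proof. by move=> H; apply: big_ind; [exact: K0 | exact: KD | exact: H]. Qed.

Lemma pnz : (p%:R : F) != 0.
Proof. by rewrite char0; case: p pP. Qed.

Lemma noK_frac n : ~~ (p %| n)%N -> K (n%:R / p%:R) -> False.
Proof.
move=> npn Kn.
have p0 : (0 < p)%N by exact: prime_gt0.
have [a _ Ha] := Bezoutl n p0.
move: (prime_coprime n pP); rewrite npn => /eqP cop.
rewrite cop in Ha.
have Hb : (1 + a * n = (1 + a * n) %/ p * p)%N by rewrite divnK.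
apply: noinv.
have -> : (p%:R^-1 : F) = ((1 + a * n) %/ p)%:R - a%:R * (n%:R / p%:R).
  have Hb' : (((1 + a * n) %/ p)%:R : F) = (1 + a%:R * n%:R) / p%:R.
    have e : (((1 + a * n)%N)%:R : F) = 1 + a%:R * n%:R by rewrite natrD natrM.
    by rewrite -e {2}Hb natrM mulfK //; exact: pnz.
  rewrite Hb'; field; exact: pnz.
by apply: KB; [exact: Knat | apply: KM => //; exact: Knat].
Qed.

Lemma Kpoly_add f g : Kpoly K f -> Kpoly K g -> Kpoly K (f + g).
Proof. by move=> Hf Hg j; rewrite coefD; apply: KD. Qed.
Lemma Kpoly_opp f : Kpoly K f -> Kpoly K (- f).
Proof. by move=> Hf j; rewrite coefN; apply: KN. Qed.
Lemma Kpoly_sub f g : Kpoly K f -> Kpoly K g -> Kpoly K (f - g).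
Proof. by move=> Hf Hg; apply: Kpoly_add => //; apply: Kpoly_opp. Qed.
Lemma Kpoly_mul f g : Kpoly K f -> Kpoly K g -> Kpoly K (f * g).
Proof. by move=> Hf Hg j; rewrite coefM; apply: Ksum => i _; apply: KM. Qed.
Lemma Kpoly_C c : K c -> Kpoly K c%:P.
Proof. by move=> Kc j; rewrite coefC; case: eqP => _ //; exact: K0. Qed.
Lemma Kpoly_nat n : Kpoly K n%:R.
Proof. by rewrite -polyC_natr; apply: Kpoly_C; exact: Knat. Qed.
Lemma Kpoly_X : Kpoly K 'X.
Proof. by move=> j; rewrite coefX; exact: Knat. Qed.
Lemma Kpoly_exp f n : Kpoly K f -> Kpoly K (f ^+ n).
Proof.
move=> Hf; elim: n => [|n IH]; first by rewrite expr0 -polyC1; exact: Kpoly_C.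
by rewrite exprS; apply: Kpoly_mul.
Qed.
Lemma Kpoly_sum (I : Type) (r : seq I) (P : pred I) (f : I -> {poly F}) :
  (forall i, P i -> Kpoly K (f i)) -> Kpoly K (\sum_(i <- r | P i) f i).
Proof.
move=> H j; rewrite coef_sum; apply: Ksum => i Pi; exact: H.
Qed.
Lemma Kpoly_scale c f : K c -> Kpoly K f -> Kpoly K (c *: f).
Proof. by move=> Kc Hf j; rewrite coefZ; apply: KM. Qed.
Lemma Kpoly_horner1 f : Kpoly K f -> K f.[1].
Proof.
move=> Hf; rewrite horner_coef; apply: Ksum => i _; rewrite expr1n mulr1; exact: Hf.
Qed.
Lemma Kpoly_comp f q : Kpoly K f -> Kpoly K q -> Kpoly K (f \Po q).
Proof.
move=> Hf Hq; rewrite comp_polyE; apply: Kpoly_sum => i _.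
by apply: Kpoly_scale; [exact: Hf | exact: Kpoly_exp].
Qed.

Definition PK (x : F) := exists z, K z /\ x = p%:R * z.
Lemma PK_add x y : PK x -> PK y -> PK (x + y).
Proof. by move=> [a [Ka ->]] [b [Kb ->]]; exists (a + b); split; [apply: KD|rewrite mulrDr]. Qed.
Lemma PK_opp x : PK x -> PK (- x).
Proof. by move=> [a [Ka ->]]; exists (- a); split; [apply: KN|rewrite mulrN]. Qed.
Lemma PK_sub x y : PK x -> PK y -> PK (x - y).
Proof. by move=> Hx Hy; apply: PK_add => //; apply: PK_opp. Qed.
Lemma PK_mull a x : K a -> PK x -> PK (a * x).
Proof. by move=> Ka [b [Kb ->]]; exists (a * b); split; [apply: KM|rewrite mulrCA]. Qed.
Lemma PK_mulr a x : K a -> PK x -> PK (x * a).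
Proof. by move=> Ka Hx; rewrite mulrC; apply: PK_mull. Qed.
Lemma PK0 : PK 0.
Proof. by exists 0; split; [exact: K0 | rewrite mulr0]. Qed.
Lemma PK_sum (I : Type) (r : seq I) (P : pred I) (f : I -> F) :
  (forall i, P i -> PK (f i)) -> PK (\sum_(i <- r | P i) f i).
Proof. by move=> H; apply: big_ind; [exact: PK0 | exact: PK_add | exact: H]. Qed.
Lemma PK_pK z : K z -> PK (p%:R * z).
Proof. by move=> Kz; exists z. Qed.
Lemma PK_bin j : (0 < j < p)%N -> PK 'C(p, j)%:R.
Proof.
move=> Hj; have := prime_dvd_bin pP Hj => /dvdnP [q Hq].
by exists q%:R; split; [exact: Knat | rewrite Hq natrM mulrC].
Qed.

Lemma M1_Phi : M1 F p = ('X - 1) * Phi F p.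
Proof. by rewrite /M1 /Phi /PhiP subrX1. Qed.

Lemma Phi_Xj j : eqm (M1 F p) (Phi F p * 'X^j) (Phi F p).
Proof.
rewrite /eqm (_ : Phi F p * 'X^j - Phi F p = ('X - 1) * Phi F p * \sum_(i < j) 'X^i).
  by rewrite -M1_Phi dvdp_mulr.
by rewrite -mulrA mulrCA -subrX1 mulrBr mulr1.
Qed.

Lemma Phi_Xp : eqm (M1 F p) (PhiP p ('X^p)) p%:R.
Proof.
rewrite /PhiP (_ : (p%:R : {poly F}) = \sum_(j < p) 1); last first.
  by rewrite sumr_const card_ord.
apply: eqm_sum => j _; exact: dvd_Xn1.
Qed.

Lemma Phi_sq : eqm (M1 F p) (Phi F p * Phi F p) (p%:R * Phi F p).
Proof.
rewrite (_ : p%:R * Phi F p = \sum_(j < p) Phi F p); last first.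
  by rewrite sumr_const card_ord mulr_natl.
rewrite {2}/Phi /PhiP mulr_sumr.
by apply: eqm_sum => j _; exact: Phi_Xj.
Qed.

Lemma sumX_eqm k' : eqm (M1 F p) (\sum_(j < k' * p) 'X^j) (k'%:R * Phi F p).
Proof.
elim: k' => [|k' IH]; first by rewrite mul0n big_ord0 mul0r; exact: eqm_refl.
rewrite mulSnr big_split_ord /= mulrSr mulrDl mul1r.
apply: eqm_add => //.
under eq_bigr do rewrite exprD.
rewrite -mulr_sumr.
apply: eqm_trans (eqm_mul (_ : eqm _ ('X^(k' * p)) 1) (eqm_refl _ _)) _.
  by rewrite /eqm mulnC exprM dvd_Xn1.
rewrite mul1r; exact: eqm_refl.
Qed.

Lemma Trep_eqm k' : eqm (M1 F p) (Trep F p (k' * p)) (k'%:R * Phi F p).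
Proof.
rewrite /Trep.
apply: eqm_trans (eqm_weak (M1_M2 F p) (redG_eqm _ _)) _.
set c := ((p ^ 2)%N%:R : F)^-1.
apply: eqm_trans (eqm_mul (sumX_eqm k') (eqm_scale c (eqm_mul (eqm_refl _ (Phi F p)) Phi_Xp))) _.
rewrite -!mul_polyC.
have -> : k'%:R * Phi F p * (c%:P * (Phi F p * p%:R)) =
          c%:P * (k'%:R * p%:R) * (Phi F p * Phi F p) by ring.
apply: eqm_trans (eqm_mul (eqm_refl _ _) Phi_sq) _.
have -> : c%:P * (k'%:R * p%:R) * (p%:R * Phi F p) =
          (c%:P * (p ^ 2)%N%:R) * (k'%:R * Phi F p).
  by rewrite natrX; ring.
rewrite -polyC_natr -polyCM mulVf; last by rewrite char0 expn_eq0; case: p pP.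
rewrite polyC1 mul1r; exact: eqm_refl.
Qed.

Lemma g1_eqm : eqm (M1 F p) (genX1 F p) (('X - 1) * p%:R).
Proof. exact: eqm_mul (eqm_refl _ _) Phi_Xp. Qed.

Lemma main_rel k' x u v i :
  M1 F p %| x ->
  x - Trep F p (k' * p) = redG p (u * genX1 F p + v * genX2 F p i) ->
  M1 F p %| k'%:R * Phi F p + p%:R * (u * ('X - 1)) + v * genX2 F p i.
Proof.
move=> Hx Hxt.
have E1 : eqm (M1 F p) (x - Trep F p (k' * p)) (u * (('X - 1) * p%:R) + v * genX2 F p i).
  rewrite Hxt; apply: eqm_trans (eqm_weak (M1_M2 F p) (redG_eqm _ _)) _.
  apply: eqm_add; last exact: eqm_refl.
  exact: eqm_mul (eqm_refl _ _) g1_eqm.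
have E2 : eqm (M1 F p) (x - Trep F p (k' * p)) (0 - k'%:R * Phi F p).
  by apply: eqm_sub; [rewrite /eqm subr0 | exact: Trep_eqm].
have := eqm_trans (eqm_sym E2) E1; rewrite /eqm => H.
have -> : k'%:R * Phi F p + p%:R * (u * ('X - 1)) + v * genX2 F p i =
  (-1) * (0 - k'%:R * Phi F p - (u * (('X - 1) * p%:R) + v * genX2 F p i)) by ring.
exact: dvdp_mull.
Qed.

Lemma Kpoly_div w : Kpoly K (w * M1 F p) -> Kpoly K w.
Proof.
move=> HR.
have p0 : (0 < p)%N by exact: prime_gt0.
have Hc : forall j, w`_j = (w * M1 F p)`_(j + p) + w`_(j + p).
  move=> j; rewrite /M1 mulrBr mulr1 coefB coefMXn.
  by rewrite ltnNge leq_addl /= addnK subrK.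
suff : forall N j, (size w - j <= N)%N -> K w`_j by move=> H j; exact: (H _ j (leqnn _)).
elim=> [|N IH] j Hj.
  have -> : w`_j = 0 by apply: nth_default; rewrite -subn_eq0 -leqn0.
  exact: K0.
case: (leqP (size w) j) => Hs.
  have -> : w`_j = 0 by apply: nth_default.
  exact: K0.
rewrite Hc; apply: KD; first exact: HR.
apply: IH; lia.
Qed.

Definition tau (f : {poly F}) := f \Po ('X + 1).

Lemma tauXm1 : tau ('X - 1) = 'X.
Proof. by rewrite /tau comp_polyB comp_polyX -polyC1 comp_polyC polyC1 addrK. Qed.

Lemma tauM f g : tau (f * g) = tau f * tau g.
Proof. exact: comp_polyM. Qed.
Lemma tauD f g : tau (f + g) = tau f + tau g.
Proof. exact: comp_polyD. Qed.
Lemma tau_nat n : tau n%:R = n%:R.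
Proof. by rewrite /tau -polyC_natr comp_polyC. Qed.
Lemma tauX n f : tau (f ^+ n) = tau f ^+ n.
Proof. exact: (rmorphXn (comp_poly ('X + 1))). Qed.

Lemma tauMX1 f : tau (f * ('X - 1)) = tau f * 'X.
Proof. by rewrite tauM tauXm1. Qed.
Lemma tauX1n n : tau (('X - 1) ^+ n) = 'X^n.
Proof. by rewrite tauX tauXm1. Qed.

Definition Bt := tau (M1 F p).
Definition Pht := tau (Phi F p).

Lemma Bt_E : Bt = ('X + 1) ^+ p - 1.
Proof.
by rewrite /Bt /tau /M1 comp_polyB comp_Xn_poly -polyC1 comp_polyC polyC1.
Qed.

Lemma XPht : 'X * Pht = Bt.
Proof. by rewrite /Bt M1_Phi tauM tauXm1. Qed.

Lemma Bt_coef j : (0 < j <= p)%N -> Bt`_j = 'C(p, j)%:R.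
Proof.
move=> /andP [j0 jp].
rewrite Bt_E exprD1n coefB coef1 (negbTE (lt0n_neq0 j0)) subr0 coef_sum.
have jp' : (j < p.+1)%N by [].
rewrite (bigD1 (Ordinal jp')) //= coefMn coefXn eqxx big1 ?addr0 //.
move=> l /eqP Hl; rewrite coefMn coefXn.
case: eqP => [Hjl|]; last by rewrite mul0rn.
by exfalso; apply: Hl; apply: val_inj.
Qed.

Lemma Bt_PK j : (j < p)%N -> PK (Bt`_j).
Proof.
case: j => [|j] Hj.
  rewrite Bt_E exprD1n coefB coef1 coef_sum /=.
  rewrite (_ : \sum_(i < p.+1) ('X^i *+ 'C(p, i))`_0 = 1); first by rewrite subrr; exact: PK0.
  rewrite big_ord_recl /= coefMn coefXn /= bin0.
  rewrite big1; first by rewrite addr0.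
  by move=> l _; rewrite coefMn coefXn /bump /= mul0rn.
rewrite Bt_coef; last by rewrite /= ltnW.
exact: PK_bin.
Qed.

Lemma Pht_PK j : (j.+1 < p)%N -> PK (Pht`_j).
Proof.
move=> Hj; have := Bt_PK Hj; by rewrite -XPht coefXM.
Qed.

Lemma tau0 f : (tau f)`_0 = f.[1].
Proof.
by rewrite -horner_coef0 /tau horner_comp hornerD hornerX hornerC add0r.
Qed.

Lemma key k' u v w i : (i.+1 < p)%N -> Kpoly K u -> Kpoly K v -> Kpoly K w ->
  v.[1] = - k'%:R ->
  k'%:R * Phi F p + p%:R * (u * ('X - 1)) + v * genX2 F p i = w * M1 F p ->
  PK (- k'%:R).
Proof.
move=> Hs Ku Kv Kw Hv1 HR.
have E := congr1 (fun f => (tau f)`_i.+1) HR; simpl in E.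
rewrite tauM -/Bt /genX2 -/(Phi F p) !tauD !tauM tauXm1 tauD tauX1n !tau_nat -/Pht in E.
rewrite !mulr_natl !coefD !coefMn mulrDr coefD coefMXn ltnn subnn tau0 Hv1 in E.
set A := (tau w * Bt)`_i.+1 in E.
set T := (tau u * 'X)`_i.+1 in E.
rewrite coefM big_ord_recl /= tau0 Hv1 subn0 in E.
set S := \sum_(j < i.+1) _ in E.
have -> : - k'%:R = A - T *+ p - S.
  rewrite -E; ring.
apply: PK_sub; first apply: PK_sub.
- rewrite /A coefM; apply: PK_sum => j _; apply: PK_mull.
    by apply: Kpoly_comp => //; apply: Kpoly_add; [exact: Kpoly_X | rewrite -polyC1; exact: Kpoly_C].
  apply: Bt_PK; apply: leq_ltn_trans Hs; exact: leq_subr.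
- rewrite -mulr_natl; apply: PK_pK.
  rewrite /T coefMX /=.
  by apply: Kpoly_comp => //; apply: Kpoly_add; [exact: Kpoly_X | rewrite -polyC1; exact: Kpoly_C].
- rewrite /S; apply: PK_sum => j _; apply: PK_mull.
    by apply: Kpoly_comp => //; apply: Kpoly_add; [exact: Kpoly_X | rewrite -polyC1; exact: Kpoly_C].
  apply: Pht_PK; rewrite /bump /=.
  apply: leq_ltn_trans Hs; rewrite subSS; apply: leq_ltn_trans (leq_subr _ _) _.
  by [].
Qed.

Lemma PhiP1 (y : {poly F}) : y.[1] = 1 -> (PhiP p y).[1] = p%:R.
Proof.
move=> Hy; rewrite /PhiP horner_sum.
under eq_bigr do rewrite horner_exp Hy expr1n.
by rewrite sumr_const card_ord.
Qed.

Lemma Trep1 k : (Trep F p k).[1] = k%:R.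
Proof.
rewrite /Trep (eqm_X1 (eqm_weak (X1_dvd _ (p ^ 2)) (redG_eqm _ _))).
rewrite hornerM hornerZ hornerM horner_sum.
under eq_bigr do rewrite hornerXn expr1n.
rewrite sumr_const card_ord !PhiP1 ?hornerX ?hornerXn ?expr1n //.
rewrite -natrM mulnn mulVf ?mulr1 //.
by rewrite char0 expn_eq0; case: p pP.
Qed.

Lemma nat_nz n : (0 < n)%N -> (n%:R : F) != 0.
Proof. by rewrite char0 lt0n. Qed.

Lemma dvd_natmul (D f : {poly F}) m : (0 < m)%N -> D %| f *+ m -> D %| f.
Proof. by move=> m0; rewrite -scaler_nat dvdpZr // nat_nz. Qed.

Lemma M2_nz : M2 F p != 0.
Proof.
apply/eqP => H; have := congr1 (fun f => f.[0]) H.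
rewrite /M2 hornerD hornerN hornerXn hornerC horner0 expr0n.
rewrite expn_eq0 /=; case: p pP => // n _ /eqP.
by rewrite sub0r oppr_eq0 oner_eq0.
Qed.

Lemma Kpoly_Phi : Kpoly K (Phi F p).
Proof. by apply: Kpoly_sum => j _; apply: Kpoly_exp; exact: Kpoly_X. Qed.

Lemma Kpoly_Xm1 : Kpoly K ('X - 1).
Proof. by apply: Kpoly_sub; [exact: Kpoly_X | rewrite -polyC1; exact: Kpoly_C]. Qed.

Lemma main_abs i : (i <= p - 2)%N -> crys_torsion_free K p i.
Proof.
move=> Hi [k x] [/= Hk [[u0 [v0 Hx]] [u [v [Ku [Kv Hxt]]]]]] m m0 Hpow.
have Hp2 : (crys_pow p (k, x) m).2 = 0 by rewrite Hpow.
have p1 : (1 < p)%N by exact: prime_gt1.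
have x1 : x.[1] = 0.
  have := eqm_X1 (crys_pow_eqm x m (X1_dvd _ (p ^ 2)) (X1_dvd _ k)).
  rewrite Hp2 horner0 hornerMn => /esym/eqP.
  by rewrite -mulr_natr mulf_eq0 (negbTE (nat_nz m0)) orbF => /eqP.
have Hv : - k%:R = v.[1] * p%:R.
  have := congr1 (fun f => f.[1]) Hxt; rewrite /=.
  rewrite (eqm_X1 (eqm_weak (X1_dvd _ (p ^ 2)) (redG_eqm _ _))).
  rewrite hornerD hornerN x1 Trep1 sub0r => ->.
  rewrite /genX1 /genX2 !(hornerD, hornerM, hornerN, hornerX, hornerC, horner_exp).
  rewrite subrr expr0n /= mul0r mulr0 add0r addr0 PhiP1 //.
  by rewrite hornerX.
have Kv1 : K v.[1] by exact: Kpoly_horner1.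
case: (boolP (p %| k)%N) => pk; last first.
  exfalso; apply: (noK_frac pk).
  have -> : k%:R / p%:R = - v.[1] by rewrite -[k%:R]opprK Hv -mulNr mulfK //; exact: pnz.
  exact: KN.
have ek := esym (divnK pk); set k' := (k %/ p)%N in ek.
case: (posnP k') => k0.
  have k00 : k = 0%N by rewrite ek k0.
  have HM2 : M2 F p %| x.
    apply: (dvd_natmul m0).
    have Hk0 : M2 F p %| 'X^k - 1 by rewrite k00 expr0 subrr dvdp0.
    have := crys_pow_eqm x m (dvdpp (M2 F p)) Hk0.
    by rewrite /eqm Hp2 sub0r => H; rewrite -[x *+ m]opprK -mulN1r; apply: dvdp_mull.
  have x0 : x = 0.
    apply/eqP; apply: contraT => xn0.
    have := dvdp_leq xn0 HM2.
    by rewrite Hx /redG -/(M2 F p) leqNgt ltn_modp M2_nz.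
  by rewrite k00 x0.
exfalso.
have k'p : (k' < p)%N.
  by rewrite -(ltn_pmul2r (prime_gt0 pP)) -ek mulnn.
have HM1 : M1 F p %| x.
  apply: (dvd_natmul m0).
  have Hk1 : M1 F p %| 'X^k - 1 by rewrite ek mulnC exprM dvd_Xn1.
  have := crys_pow_eqm x m (M1_M2 F p) Hk1.
  by rewrite /eqm Hp2 sub0r => H; rewrite -[x *+ m]opprK -mulN1r; apply: dvdp_mull.
rewrite ek in Hxt.
have HR := main_rel HM1 Hxt.
set R := _ + _ + _ in HR.
have HRw : R = (R %/ M1 F p) * M1 F p by rewrite divpK.
have KR : Kpoly K R.
  apply: Kpoly_add; first apply: Kpoly_add.
  - apply: Kpoly_mul; [exact: Kpoly_nat | exact: Kpoly_Phi].
  - by apply: Kpoly_mul; [exact: Kpoly_nat | apply: Kpoly_mul => //; exact: Kpoly_Xm1].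
  - apply: Kpoly_mul => //; apply: Kpoly_add; first exact: Kpoly_Phi.
    by apply: Kpoly_exp; exact: Kpoly_Xm1.
have Kw : Kpoly K (R %/ M1 F p) by apply: Kpoly_div; rewrite -HRw.
have Hv1 : v.[1] = - k'%:R.
  apply: (mulIf pnz); by rewrite -Hv ek natrM mulNr.
have Hs : (i.+1 < p)%N by lia.
have [z [Kz Hz]] := key Hs Ku Kv Kw Hv1 HRw.
have Hpk : ~~ (p %| k')%N.
  by apply/negP => /(dvdn_leq k0); rewrite leqNgt k'p.
apply: (noK_frac Hpk).
have -> : k'%:R / p%:R = - z.
  by rewrite -[k'%:R]opprK Hz -mulrN mulrC mulKf //; exact: pnz.
exact: KN.
Qed.

End Abs.

Section Zloc.
Variable F : fieldType.
Variable p : nat.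
Hypothesis pP : prime p.
Hypothesis char0 : forall n : nat, (n%:R == 0 :> F) = (n == 0)%N.

Lemma intrF_eq0 (z : int) : (z%:~R : F) = 0 -> z = 0.
Proof.
case: z => n /=.
  by rewrite -pmulrn => /eqP; rewrite char0 => /eqP ->.
rewrite NegzE intrN -pmulrn => /eqP; rewrite oppr_eq0 char0.
by [].
Qed.

Lemma intrF_inj (z w : int) : (z%:~R : F) = w%:~R -> z = w.
Proof. by move=> H; apply/eqP; rewrite -subr_eq0; apply/eqP/intrF_eq0; rewrite intrB H subrr. Qed.

Definition goodF (x : F) := exists n d : int, ~~ (p%:Z %| d)%Z /\ x * d%:~R = n%:~R.

Lemma ndvd_nz (d : int) : ~~ (p%:Z %| d)%Z -> d != 0.
Proof. by apply: contra => /eqP ->; rewrite dvdz0. Qed.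

Lemma ndvdM (d1 d2 : int) : ~~ (p%:Z %| d1)%Z -> ~~ (p%:Z %| d2)%Z -> ~~ (p%:Z %| d1 * d2)%Z.
Proof. by rewrite !dvdzE abszM Euclid_dvdM // => /negbTE -> /negbTE ->. Qed.

Lemma goodF_add x y : goodF x -> goodF y -> goodF (x + y).
Proof.
move=> [n1 [d1 [h1 e1]]] [n2 [d2 [h2 e2]]].
exists (n1 * d2 + n2 * d1), (d1 * d2); split; first exact: ndvdM.
by rewrite intrD !intrM -e1 -e2; ring.
Qed.

Lemma goodF_mul x y : goodF x -> goodF y -> goodF (x * y).
Proof.
move=> [n1 [d1 [h1 e1]]] [n2 [d2 [h2 e2]]].
exists (n1 * n2), (d1 * d2); split; first exact: ndvdM.
by rewrite !intrM -e1 -e2; ring.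
Qed.

Lemma p_ndvd1 : ~~ (p%:Z %| 1)%Z.
Proof. by rewrite dvdzE /= dvdn1; case: p pP => [|[|]]. Qed.

Lemma goodq (q : rat) (n d : int) : ~~ (p%:Z %| d)%Z -> q * d%:~R = n%:~R ->
  ~~ (p%:Z %| denq q)%Z.
Proof.
move=> hd e; apply: contra hd => hp.
apply: dvdz_trans hp _.
have e2 : numq q * d = n * denq q.
  apply: (@intr_inj rat); rewrite !intrM numqE -e; ring.
have : (denq q %| d * numq q)%Z by rewrite mulrC e2 dvdz_mull.
rewrite Gauss_dvdzl //.
by rewrite coprimezE coprime_sym; exact: coprime_num_den.
Qed.

Lemma goodF_iff (x : F) : (exists q : rat, ~~ (p%:Z %| denq q)%Z /\ x = ratr q) <-> goodF x.
Proof.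
have nzF : forall z : int, z != 0 -> (z%:~R : F) != 0.
  by move=> z /eqP hz; apply/eqP => /intrF_eq0.
split.
  move=> [q [hq ->]]; exists (numq q), (denq q); split => //.
  by rewrite /ratr mulfVK // nzF // denq_neq0.
move=> [n [d [hd e]]].
have d0 := ndvd_nz hd.
set q : rat := n%:~R / d%:~R.
have eq : q * d%:~R = n%:~R by rewrite /q mulfVK // intr_eq0.
exists q; split; first exact: goodq eq.
have e2 : numq q * d = n * denq q.
  apply: (@intr_inj rat); rewrite !intrM numqE -eq; ring.
rewrite /ratr.
apply: (mulIf (nzF _ d0)); rewrite e.
apply: (mulIf (nzF _ (denq_neq0 q))).
rewrite mulrAC mulfVK ?nzF ?denq_neq0 //.
by rewrite -!intrM e2.
Qed.

End Zloc.

Lemma Zloc_props (p : nat) (F : fieldType) (K : F -> Prop) : prime p -> is_Zloc_in p K ->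
  K 1 /\ K (-1) /\ (forall x y, K x -> K y -> K (x + y)) /\
      (forall x y, K x -> K y -> K (x * y)) /\
      (forall n : nat, (n%:R == 0 :> F) = (n == 0)%N) /\ ~ K (p%:R^-1).
Proof.
move=> pP [hc hK].
have char0 := proj1 (pcharf0P F) hc.
have KE : forall x, K x <-> goodF p x by move=> x; rewrite hK goodF_iff.
split; [|split; [|split; [|split; [|split]]]].
- by apply/KE; exists 1, 1; split; [exact: p_ndvd1 | rewrite mulr1].
- by apply/KE; exists (-1), 1; split; [exact: p_ndvd1 | rewrite mulr1 intrN].
- by move=> x y /KE hx /KE hy; apply/KE; exact: goodF_add.
- by move=> x y /KE hx /KE hy; apply/KE; exact: goodF_mul.
- exact: char0.
move=> /KE [n [d [hd e]]].
have pF : (p%:R : F) != 0 by rewrite char0 -lt0n; exact: prime_gt0.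
have : (d%:~R : F) = (p%:Z * n)%:~R.
  by rewrite intrM -e mulrA mulfV // mul1r.
move/(intrF_inj char0) => ed.
by move: hd; rewrite ed dvdz_mulr.
Qed.

Section Zpadic.
Variable p : nat.
Hypothesis pP : prime p.

Definition zc (a : int) : Defs.Zp p :=
  exist (fun x : nat -> int => forall n, x n = modz (x n.+1) (zp_mod p n))
    (fun n => modz a (zp_mod p n)) (fun n => esym (zp_mod_mod p n a)).

Lemma zp_ext (x y : Defs.Zp p) : (forall n, sval x n = sval y n) -> x = y.
Proof.
case: x => f hf; case: y => g hg /= H.
have fg : f = g by apply: functional_extensionality.
subst g; f_equal; apply: proof_irrelevance.
Qed.

Lemma zc_add a b : zp_add (zc a) (zc b) = zc (a + b).
Proof. by apply: zp_ext => n /=; rewrite modzDml modzDmr. Qed.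
Lemma zc_mul a b : zp_mul (zc a) (zc b) = zc (a * b).
Proof. by apply: zp_ext => n /=; rewrite modzMml modzMmr. Qed.
Lemma zc_one : zp_one p = zc 1.
Proof. by apply: zp_ext. Qed.

Variable F : fieldType.
Variable phi : Defs.Zp p -> F.
Hypothesis phi_inj : injective phi.
Hypothesis phiD : forall x y, phi (zp_add x y) = phi x + phi y.
Hypothesis phiM : forall x y, phi (zp_mul x y) = phi x * phi y.
Hypothesis phi1 : phi (zp_one p) = 1.

Lemma phi0 : phi (zc 0) = 0.
Proof.
have := phiD (zc 0) (zc 0); rewrite zc_add addr0.
by rewrite -{1}(addr0 (phi (zc 0))) => /addrI /esym.
Qed.

Lemma phi_nat (n : nat) : phi (zc n%:Z) = n%:R.
Proof.
elim: n => [|n IH]; first exact: phi0.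
by rewrite intS addrC -zc_add phiD IH -zc_one phi1 mulrSr.
Qed.

Lemma phiN1 : phi (zc (-1)) = -1.
Proof.
have := phiD (zc (-1)) (zc 1); rewrite zc_add addNr phi0 -zc_one phi1.
by move=> h; apply/eqP; rewrite -addr_eq0 h.
Qed.

Lemma pge2 : (2 <= p)%N. Proof. exact: prime_gt1. Qed.

Lemma zp_mod0 : zp_mod p 0 = p%:Z.
Proof. by rewrite /zp_mod expn1 (maxn_idPr pge2). Qed.

Lemma phi_char0 (n : nat) : (n%:R == 0 :> F) = (n == 0)%N.
Proof.
case: n => [|n]; first by rewrite mulr0n !eqxx.
rewrite (_ : (n.+1 == 0)%N = false) //; apply/negbTE/eqP.
rewrite -phi_nat -phi0 => /phi_inj /(congr1 (fun z => sval z n.+1)) /=.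
rewrite mod0z modz_small //.
apply/andP; split => //; rewrite /zp_mod ltz_nat.
apply: (ltn_trans (ltnSn n.+1)); apply: ltn_expl.
exact: leq_trans (leq_maxl 2 p).
Qed.

Lemma phi_noinv z : phi z = p%:R^-1 -> False.
Proof.
move=> hz.
have pF : (p%:R : F) != 0 by rewrite phi_char0 -lt0n; exact: prime_gt0.
have : phi (zp_mul (zc p%:Z) z) = phi (zp_one p).
  by rewrite phiM phi_nat hz mulfV // phi1.
move/phi_inj/(congr1 (fun z => sval z 0%N)) => /=.
rewrite zp_mod0 modzz mul0r mod0z modz_small //.
by apply/andP; split => //; rewrite ltz_nat; exact: prime_gt1.
Qed.

End Zpadic.

Lemma Zpadic_props (p : nat) (F : fieldType) (K : F -> Prop) : prime p -> is_Zpadic_in p K ->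
  K 1 /\ K (-1) /\ (forall x y, K x -> K y -> K (x + y)) /\
      (forall x y, K x -> K y -> K (x * y)) /\
      (forall n : nat, (n%:R == 0 :> F) = (n == 0)%N) /\ ~ K (p%:R^-1).
Proof.
move=> pP [phi [hi [hD [hM [h1 hK]]]]].
split; [|split; [|split; [|split; [|split]]]].
- by apply/hK; exists (zp_one p); rewrite h1.
- by apply/hK; exists (zc p (-1)); rewrite (phiN1 hD h1).
- by move=> x y /hK [a ->] /hK [b ->]; apply/hK; exists (zp_add a b); rewrite hD.
- by move=> x y /hK [a ->] /hK [b ->]; apply/hK; exists (zp_mul a b); rewrite hM.
- exact: (phi_char0 hi hD h1).
- by move=> /hK [z hz]; apply: (phi_noinv pP hi hD hM h1 (esym hz)).
Qed.

Theorem lemma8 (p : nat) (F : fieldType) (K : F -> Prop) (i : nat) :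
  prime p ->
  (is_Zloc_in p K \/ is_Zpadic_in p K) ->
  (i <= p - 2)%N ->
  crys_torsion_free K p i.
Proof.
move=> pP HK Hi.
have [K1 [KN1 [KD [KM [char0 noinv]]]]] :
  K 1 /\ K (-1) /\ (forall x y, K x -> K y -> K (x + y)) /\
      (forall x y, K x -> K y -> K (x * y)) /\
      (forall n : nat, (n%:R == 0 :> F) = (n == 0)%N) /\ ~ K (p%:R^-1).
  by case: HK => H; [exact: Zloc_props | exact: Zpadic_props].
exact: (main_abs pP K1 KN1 KD KM char0 noinv Hi).
Qed.
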